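(* Let $(R,\mathfrak{m})$ be a Noetherian local domain of prime characteristic $p$. Then every prime ideal $\mathfrak{p}$ of $R_\infty$ is of the form $\sum_{i=1}^\ell(x_i^\infty)R_\infty$ for some $x_1,\dots,x_\ell\in R_\infty$. Moreover, if $\dim R<3$, there is an integer $\ell$, independent of $\mathfrak{p}$, such that every prime ideal of $R_\infty$ has this form with that $\ell$.
   Context: $R_\infty=\{x\in R^+: x^{p^n}\in R\text{ for some }n\ge0\}$, where $R^+$ is the integral closure of $R$ in an algebraic closure of its fraction field. For $x\in R_\infty$, $(x^\infty)R_\infty:=(x^{1/p^n}: n\ge0)R_\infty$. *)

(* Defs.v *)
From HB Require Import structures.
From mathcomp Require Import all_boot all_order all_algebra.
Set Implicit Arguments. Unset Strict Implicit. Unset Printing Implicit Defensive.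
Import GRing.Theory.
Local Open Scope ring_scope.

(* Ideals are predicates (T -> Prop).  [ideal_in S I]: I is an ideal of the
   subring S of the commutative ring T (for the whole ring take S := fun _ => True). *)
Definition ideal_in (T : comNzRingType) (S I : T -> Prop) : Prop :=
  [/\ (forall x, I x -> S x), I 0,
      (forall x y, I x -> I y -> I (x + y)) &
      (forall a x, S a -> I x -> I (a * x))].

Definition prime_ideal_in (T : comNzRingType) (S I : T -> Prop) : Prop :=
  [/\ ideal_in S I, ~ I 1 &
      (forall x y, S x -> S y -> I (x * y) -> I x \/ I y)].

Definition whole (T : Type) : T -> Prop := fun _ => True.

Definition ideal (R : comNzRingType) (I : R -> Prop) := ideal_in (@whole R) I.
Definition prime_ideal (R : comNzRingType) (I : R -> Prop) :=
  prime_ideal_in (@whole R) I.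

Definition maximal_ideal (R : comNzRingType) (I : R -> Prop) : Prop :=
  [/\ ideal I, ~ I 1 &
      forall J, ideal J -> (forall x, I x -> J x) ->
        (forall x, J x <-> I x) \/ (forall x, J x)].

Definition noetherian (R : comNzRingType) : Prop :=
  forall I : nat -> R -> Prop, (forall n, ideal (I n)) ->
    (forall n x, I n x -> I n.+1 x) ->
    exists N, forall n, (N <= n)%N -> forall x, I n x <-> I N x.

Definition local_ring (R : comNzRingType) : Prop :=
  exists m : R -> Prop, maximal_ideal m /\
    forall n, maximal_ideal n -> forall x, n x <-> m x.

Definition strict_incl (T : Type) (A B : T -> Prop) : Prop :=
  (forall x, A x -> B x) /\ exists x, B x /\ ~ A x.

Definition krull_dim_lt (R : comNzRingType) (d : nat) : Prop :=
  ~ exists P : nat -> R -> Prop,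
      (forall i, (i <= d)%N -> prime_ideal (P i)) /\
      (forall i, (i < d)%N -> strict_incl (P i) (P i.+1)).

(* R_infty, realised inside an algebraic closure L of Frac R via the
   embedding f : R -> L. *)
Definition R_inf (R : idomainType) (L : fieldType) (f : R -> L) (p : nat) : L -> Prop :=
  fun z => exists n : nat, exists r : R, z ^+ (p ^ n) = f r.

(* sum_{x in xs} (x^infty) S : the S-ideal generated by all p^n-th roots
   x^{1/p^n} (n >= 0) of the elements x of xs. *)
Definition roots_ideal (L : fieldType) (S : L -> Prop) (p : nat) (xs : seq L) : L -> Prop :=
  fun z => exists (m : nat) (a g : 'I_m -> L),
    [/\ (forall j, S (a j)),
        (forall j, exists n : nat, g j ^+ (p ^ n) \in xs) &
        z = \sum_(j < m) a j * g j].

(* Main.v *)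
Require Import Defs.
From HB Require Import structures.
From mathcomp Require Import all_boot all_order all_algebra.
From Stdlib Require Import Classical ClassicalEpsilon IndefiniteDescription.
From Stdlib Require List.
Set Implicit Arguments. Unset Strict Implicit.
Import GRing.Theory.
Local Open Scope ring_scope.

Section Gen.
Variable T : comNzRingType.

Lemma id0 (I : T -> Prop) : ideal I -> I 0. Proof. by case. Qed.
Lemma idD (I : T -> Prop) x y : ideal I -> I x -> I y -> I (x + y).
Proof. by case=> _ _ h _; apply: h. Qed.
Lemma idM (I : T -> Prop) a x : ideal I -> I x -> I (a * x).
Proof. by case=> _ _ _ h; apply: h. Qed.
Lemma idMr (I : T -> Prop) a x : ideal I -> I x -> I (x * a).
Proof. by move=> hI hx; rewrite mulrC; apply: idM. Qed.
Lemma idN (I : T -> Prop) x : ideal I -> I x -> I (- x).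
Proof. by move=> hI hx; rewrite -mulN1r; apply: idM. Qed.
Lemma idB (I : T -> Prop) x y : ideal I -> I x -> I y -> I (x - y).
Proof. by move=> hI hx hy; apply: idD => //; apply: idN. Qed.
Lemma id1 (I : T -> Prop) x : ideal I -> I 1 -> I x.
Proof. by move=> hI h1; rewrite -[x]mulr1; apply: idM. Qed.

Definition span (s : seq T) : T -> Prop :=
  fun r => exists c : nat -> T, r = \sum_(i < size s) c i * s`_i.

Lemma span_ideal s : ideal (span s).
Proof.
split=> //.
- by exists (fun _ => 0); rewrite big1 // => i _; rewrite mul0r.
- move=> x y [c ->] [d ->]; exists (fun i => c i + d i).
  by rewrite -big_split /=; apply: eq_bigr => i _; rewrite mulrDl.
- move=> a x _ [c ->]; exists (fun i => a * c i).
  by rewrite mulr_sumr; apply: eq_bigr => i _; rewrite mulrA.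
Qed.

Lemma span_sub (I : T -> Prop) s r : ideal I -> (forall y, y \in s -> I y) ->
  span s r -> I r.
Proof.
move=> hI hs [c ->]; apply: (big_ind I) => //.
- exact: id0.
- by move=> x y; apply: idD.
- move=> i _; apply: (@idM I (c i) s`_i hI); by apply: hs; apply: mem_nth.
Qed.

Lemma span_mem s y : y \in s -> span s y.
Proof.
move=> ys; exists (fun i => (i == index y s)%:R).
have hi : (index y s < size s)%N by rewrite index_mem.
rewrite (bigD1 (Ordinal hi)) //= eqxx mul1r nth_index // big1 ?addr0 // => i hne.
suff -> : (nat_of_ord i == index y s) = false by rewrite mul0r.
by apply/negbTE; apply: contra hne => /eqP h; apply/eqP; apply: val_inj.
Qed.

Lemma noeth_ind (G : (T -> Prop) -> Prop) : noetherian T ->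
  (forall I, ideal I -> (forall J, ideal J -> strict_incl I J -> G J) -> G I) ->
  forall I, ideal I -> G I.
Proof.
move=> hN step I0 hI0; apply: NNPP => nG0.
have nx : forall I, ideal I -> ~ G I -> exists J, ideal J /\ strict_incl I J /\ ~ G J.
  move=> I hI nG; apply: NNPP => hno; apply: nG; apply: step => // J hJ hs.
  apply: NNPP => nGJ; apply: hno; by exists J.
pose X := {I : T -> Prop | ideal I /\ ~ G I}.
have nxs : forall x : X, {y : X | strict_incl (sval x) (sval y)}.
  move=> [I [hI nG]]; apply: constructive_indefinite_description.
  have [J [hJ [hs nGJ]]] := nx I hI nG.
  by exists (exist _ J (conj hJ nGJ)).
pose x0 : X := exist _ I0 (conj hI0 nG0).
pose s := fix s n := if n is n'.+1 then sval (nxs (s n')) else x0.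
have hsS : forall n, strict_incl (sval (s n)) (sval (s n.+1)).
  by move=> n; rewrite /=; exact: (svalP (nxs (s n))).
have [N hNn] := hN (fun n => sval (s n)) (fun n => proj1 (svalP (s n)))
  (fun n x h => proj1 (hsS n) x h).
have [_ [z [hz1 hz0]]] := hsS N.
by apply: hz0; apply/(hNn N.+1 (leqnSn N)).
Qed.


Lemma fin_gen (Q : T -> Prop) : noetherian T -> ideal Q ->
  exists s, (forall y, y \in s -> Q y) /\ forall r, Q r <-> span s r.
Proof.
move=> hN hQ.
pose G := fun J : T -> Prop => forall s, (forall y, y \in s -> Q y) ->
  (forall r, J r <-> span s r) ->
  exists s, (forall y, y \in s -> Q y) /\ forall r, Q r <-> span s r.
suff : G (span [::]).
  by move=> h; apply: (h [::]) => // r; split.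
apply: (noeth_ind hN); last exact: span_ideal.
move=> J hJ IH s hsQ hJs.
have [hall | [x hx]] : (forall r, Q r -> J r) \/ exists x, Q x /\ ~ J x.
  apply: NNPP => hn; apply: (hn); left => r qr; apply: NNPP => nj; apply: hn.
  by right; exists r.
- exists s; split => // r; split; first by move/hall/hJs.
  by move=> hr; exact: (span_sub hQ hsQ hr).
- have hsub : forall y, y \in rcons s x -> Q y.
    by move=> y; rewrite mem_rcons inE => /orP[/eqP -> | /hsQ]; case: hx.
  apply: (IH (span (rcons s x))).
  + exact: span_ideal.
  + split.
      move=> r /hJs hr; apply: (span_sub (span_ideal _)) hr => y ys.
      by apply: span_mem; rewrite mem_rcons inE ys orbT.
    exists x; split; last by case: hx.
    by apply: span_mem; rewrite mem_rcons inE eqxx.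
  + exact: hsub.
  + by move=> r; split.
Qed.

Lemma maximal_prime (M : T -> Prop) : maximal_ideal M -> prime_ideal M.
Proof.
move=> [hM n1 hmax]; split => // a b _ _ hab.
apply: NNPP => hn.
have na : ~ M a by move=> h; apply: (hn); left.
have nb : ~ M b by move=> h; apply: (hn); right.
pose J := fun z => exists i c, M i /\ z = i + c * a.
have hJ : ideal J.
  split => //.
  - by exists 0, 0; split; [exact: id0 | rewrite mul0r addr0].
  - move=> x y [i [c [hi ->]]] [j [d [hj ->]]]; exists (i + j), (c + d).
    split; first exact: idD. by rewrite mulrDl addrACA.
  - move=> u x _ [i [c [hi ->]]]; exists (u * i), (u * c).
    split; first exact: idM. by rewrite mulrDr mulrA.
have [h | h] := hmax J hJ (fun x hx => ex_intro _ x (ex_intro _ 0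
    (conj hx (esym (eq_ind_r (fun z => z = x) (addr0 x) (f_equal (GRing.add x) (mul0r a))))))).
- apply: na; apply/h; exists 0, 1; split; [exact: id0 | by rewrite add0r mul1r].
- have [i [c [hi h1]]] := h 1; apply: nb.
  have -> : b = i * b + c * (a * b) by rewrite mulrA -mulrDl -h1 mul1r.
  by apply: idD => //; [apply: idMr | apply: idM].
Qed.

Lemma exists_max (I : T -> Prop) : noetherian T -> ideal I -> ~ I 1 ->
  exists M, maximal_ideal M /\ forall x, I x -> M x.
Proof.
move=> hN; move: I; apply: (noeth_ind hN) => I hI IH n1.
have [hm | hnm] := classic (maximal_ideal I); first by exists I.
have [J [hJ [hIJ [hne hnw]]]] : exists J, ideal J /\ (forall x, I x -> J x) /\
   ~ (forall x, J x <-> I x) /\ ~ (forall x, J x).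
  apply: NNPP => hn; apply: (hnm); split => // J hJ hIJ.
  have [h|h] := classic (forall x, J x <-> I x); first by left.
  right; apply: NNPP => h2; apply: (hn); by exists J.
have [x [hx nx]] : exists x, J x /\ ~ I x.
  apply: NNPP => hn; apply: hne => x; split; last exact: hIJ.
  move=> jx; apply: NNPP => nx; apply: (hn); by exists x.
have [M [hM hJM]] := IH J hJ (conj hIJ (ex_intro _ x (conj hx nx)))
  (fun h => hnw (fun y => id1 y hJ h)).
by exists M; split => // y /hIJ /hJM.
Qed.


Definition decomp (I : T -> Prop) (Ps : seq (T -> Prop)) :=
  [/\ (forall P, List.In P Ps -> prime_ideal P /\ forall x, I x -> P x),
      (forall r, (forall P, List.In P Ps -> P r) -> exists n, I (r ^+ n)) &
      (forall P, prime_ideal P -> (forall x, I x -> P x) ->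
          exists P', List.In P' Ps /\ forall x, P' x -> P x)].

Lemma exists_decomp (I : T -> Prop) : noetherian T -> ideal I ->
  exists Ps, decomp I Ps.
Proof.
move=> hN; move: I; apply: (noeth_ind hN) => I hI IH.
have [i1 | n1] := classic (I 1).
  exists [::]; split => //.
  - by move=> r _; exists 0%N; rewrite expr0.
  - by move=> P [_ nP1 _] hIP; exfalso; apply: nP1; apply: hIP.
have [pr | npr] := classic (prime_ideal I).
  exists [:: I]; split.
  - by move=> P [<- | []]; split.
  - by move=> r h; exists 1%N; rewrite expr1; apply: h; left.
  - by move=> P _ h; exists I; split => //; left.
have [a [b [hab [na nb]]]] : exists a b, I (a * b) /\ ~ I a /\ ~ I b.
  apply: NNPP => hn; apply: (npr); split => // x y _ _ hxy.
  apply: NNPP => hn2; apply: (hn); exists x, y; split => //; split.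
  + by move=> h; apply: hn2; left.
  + by move=> h; apply: hn2; right.
pose J c := fun z => exists i d, I i /\ z = i + d * c.
have hJ : forall c, ideal (J c).
  move=> c; split => //.
  - by exists 0, 0; split; [exact: id0 | rewrite mul0r addr0].
  - move=> x y [i [e [hi ->]]] [j [d [hj ->]]]; exists (i + j), (e + d).
    split; first exact: idD. by rewrite mulrDl addrACA.
  - move=> u x _ [i [e [hi ->]]]; exists (u * i), (u * e).
    split; first exact: idM. by rewrite mulrDr mulrA.
have hIJ : forall c x, I x -> J c x.
  by move=> c x hx; exists x, 0; rewrite mul0r addr0.
have hcJ : forall c, J c c.
  by move=> c; exists 0, 1; split; [exact: id0 | rewrite add0r mul1r].
have [L1 [d11 d12 d13]] := IH (J a) (hJ a) (conj (hIJ a) (ex_intro _ a (conj (hcJ a) na))).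
have [L2 [d21 d22 d23]] := IH (J b) (hJ b) (conj (hIJ b) (ex_intro _ b (conj (hcJ b) nb))).
exists (L1 ++ L2); split.
- move=> P h0; case: (List.in_app_or _ _ _ h0) => h.
  + by have [hp hs] := d11 P h; split => // x /(hIJ a) /hs.
  + by have [hp hs] := d21 P h; split => // x /(hIJ b) /hs.
- move=> r hr.
  have [n [i [c [hi hn]]]] := d12 r (fun P h => hr P (List.in_or_app _ _ _ (or_introl h))).
  have [m [j [d [hj hm]]]] := d22 r (fun P h => hr P (List.in_or_app _ _ _ (or_intror h))).
  exists (n + m)%N; rewrite exprD hn hm.
  have -> : (i + c * a) * (j + d * b) = i * (j + d * b) + (c * a * j + c * d * (a * b)).
    by rewrite mulrDl [(c * a) * _]mulrDr mulrACA.
  apply: idD => //; first exact: idMr.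
  by apply: idD => //; apply: idM.
- move=> P hP hIP.
  have hPi : ideal P by case: hP.
  have [pa | pb] : P a \/ P b by case: hP => _ _ h; apply: h => //; apply: hIP.
  + have hs : forall z, J a z -> P z.
      move=> z; rewrite /J => -[i [c [hi ->]]]; apply: (idD hPi); [exact: hIP | exact: (@idM P c a hPi pa)].
    have [P' [h1 h2]] := d13 P hP hs.
    by exists P'; split => //; apply: List.in_or_app; left.
  + have hs : forall z, J b z -> P z.
      move=> z; rewrite /J => -[i [c [hi ->]]]; apply: (idD hPi); [exact: hIP | exact: (@idM P c b hPi pb)].
    have [P' [h1 h2]] := d23 P hP hs.
    by exists P'; split => //; apply: List.in_or_app; right.
Qed.


Lemma avoid_prod (P Q : T -> Prop) d (Ps : seq (T -> Prop)) :
  prime_ideal P -> ideal Q -> (forall Pj, List.In Pj Ps -> ideal Pj) ->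
  Q d -> ~ P d -> (forall Pj, List.In Pj Ps -> exists b, Pj b /\ ~ P b) ->
  exists c, [/\ Q c, ~ P c & forall Pj, List.In Pj Ps -> Pj c].
Proof.
move=> hP hQ; elim: Ps => [|P0 Ps IH] hPs hd nd hb.
  by exists d; split.
have [c [qc nc hc]] := IH (fun Pj h => hPs Pj (or_intror h)) hd nd
   (fun Pj h => hb Pj (or_intror h)).
have [b [hb0 nb]] := hb P0 (or_introl erefl).
exists (b * c); split.
- exact: idM.
- by case: hP => _ _ h /h [] //.
- move=> Pj [<- | h].
  + by apply: idMr => //; apply: hPs; left.
  + by apply: idM => //; [apply: hPs; right | apply: hc].
Qed.

Lemma avoidance (Q : T -> Prop) (Ps : seq (T -> Prop)) : ideal Q ->
  (forall P, List.In P Ps -> prime_ideal P /\ exists q, Q q /\ ~ P q) ->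
  exists y, Q y /\ forall P, List.In P Ps -> ~ P y.
Proof.
move=> hQ; move: {2}(size Ps) (leqnn (size Ps)) => n.
elim: n Ps => [|n IH] [|P Ps'] //=.
- by move=> _ _; exists 0; split => //; exact: id0.
- by move=> _ _; exists 0; split => //; exact: id0.
move=> hs hPs.
have hP : prime_ideal P by case: (hPs P (or_introl erefl)).
have hPi : ideal P by case: hP.
have [[Pj [hj hjP]] | nsub] := classic (exists Pj, List.In Pj Ps' /\ forall x, Pj x -> P x).
  have [l1 [l2 e]] := List.in_split _ _ hj.
  have hs' : (size (P :: l1 ++ l2) <= n)%N.
    move: hs; rewrite e /= size_cat /= size_cat addnS ltnS; exact: id.
  have hsub : forall P0, List.In P0 (P :: l1 ++ l2) -> List.In P0 (P :: Ps').
    move=> P0 [<- | h']; first by left.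
    right; rewrite e; apply: List.in_or_app.
    by case: (List.in_app_or _ _ _ h') => h2; [left | right; right].
  have [y [qy hy]] := IH (P :: l1 ++ l2) hs' (fun P0 h => hPs P0 (hsub P0 h)).
  exists y; split => // P0 [<- | h]; first by apply: hy; left.
  rewrite e in h; case: (List.in_app_or _ _ _ h) => [h1 | [<- | h2]].
  + by apply: hy; right; apply: List.in_or_app; left.
  + by move=> /hjP; apply: hy; left.
  + by apply: hy; right; apply: List.in_or_app; right.
have [a [qa ha]] := IH Ps' hs (fun P0 h => hPs P0 (or_intror h)).
have [pa | npa] := classic (P a); last first.
  by exists a; split => // P0 [<- | h] //; apply: ha.
have [d [qd nd]] := proj2 (hPs P (or_introl erefl)).
have hb : forall Pj, List.In Pj Ps' -> exists b, Pj b /\ ~ P b.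
  move=> Pj h; apply: NNPP => hn; apply: nsub; exists Pj; split => // x px.
  apply: NNPP => npx; apply: hn; by exists x.
have hPs'i : forall Pj, List.In Pj Ps' -> ideal Pj.
  by move=> Pj h; case: (hPs Pj (or_intror h)) => -[].
have [c [qc nc hc]] := avoid_prod hP hQ hPs'i qd nd hb.
exists (a + c); split; first exact: idD.
move=> P0 [<- | h] hac.
- by apply: nc; rewrite -(addKr a c); apply: idD => //; apply: idN.
- apply: (ha P0 h); rewrite -(addrK c a).
  by apply: idB => //; [apply: hPs'i | apply: hc].
Qed.

Lemma filter_ex (A : Type) (C : A -> Prop) (Ps : seq A) :
  exists Qs, forall x, List.In x Qs <-> List.In x Ps /\ C x.
Proof.
elim: Ps => [|a Ps [Qs hQ]]; first by exists [::]; move=> x; split => // -[].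
have [ca | nca] := classic (C a).
- exists (a :: Qs) => x; split.
  + by move=> [<- | /hQ [h1 h2]]; split => //; [left | right].
  + by move=> [[<- | h] cx]; [left | right; apply/hQ].
- exists Qs => x; split.
  + by move=> /hQ [h1 h2]; split => //; right.
  + by move=> [[<- | h] cx] //; apply/hQ.
Qed.

End Gen.
Section Frob.
Variable F : fieldType.
Variable p : nat.
Hypothesis hp : p \in [pchar F].

Lemma pnat_pN N : [pchar F].-nat (p ^ N)%N.
Proof.
rewrite pnatX; apply/orP; left.
by rewrite (eq_pnat _ (pcharf_eq hp)) pnat_id // (pcharf_prime hp).
Qed.

Lemma frobD N (x y : F) : (x + y) ^+ (p ^ N)%N = x ^+ (p ^ N)%N + y ^+ (p ^ N)%N.
Proof. exact: exprDn_pchar (pnat_pN N). Qed.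

Lemma frob_inj N (x y : F) : x ^+ (p ^ N)%N = y ^+ (p ^ N)%N -> x = y.
Proof.
move=> h; have : (x - y) ^+ (p ^ N)%N = 0.
  have e := frobD N (x - y) y; rewrite subrK h in e.
  by apply/eqP; rewrite -[X in X == 0](addrK (y ^+ (p ^ N)%N)) -e subrr.
by move/eqP; rewrite expf_eq0 subr_eq0 => /andP[_ /eqP].
Qed.

Lemma frob_sum N m (G : 'I_m -> F) :
  (\sum_(i < m) G i) ^+ (p ^ N)%N = \sum_(i < m) G i ^+ (p ^ N)%N.
Proof.
apply: (big_morph (fun x => x ^+ (p ^ N)%N)).
- by move=> x y; apply: frobD.
- by rewrite expr0n expn_eq0 (gtn_eqF (prime_gt0 (pcharf_prime hp))).
Qed.
End Frob.
Section Bridge.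
Variables (p : nat) (R : idomainType) (L : closedFieldType) (f : {rmorphism R -> L}).
Hypothesis hpL : p \in [pchar L].
Local Notation S := (R_inf f p).

Lemma S_f r : S (f r).
Proof. by exists 0%N, r; rewrite expn0 expr1. Qed.

Lemma S_mul z w : S z -> S w -> S (z * w).
Proof.
move=> [n [r e]] [m [s e']]; exists (n + m)%N, (r ^+ (p ^ m) * s ^+ (p ^ n)).
rewrite exprMn expnD rmorphM !rmorphXn -e -e' -!exprM; congr (_ * _).
by rewrite mulnC.
Qed.

Lemma S_exp z k : S z -> S (z ^+ k).
Proof.
move=> hz; elim: k => [|k IH]; first by rewrite expr0 -(rmorph1 f); apply: S_f.
by rewrite exprS; apply: S_mul.
Qed.

Variable P : L -> Prop.
Hypothesis hP : prime_ideal_in S P.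

Lemma P_S z : P z -> S z. Proof. by case: hP => -[h _ _ _] _ _; apply: h. Qed.
Lemma P0 : P 0. Proof. by case: hP => -[]. Qed.
Lemma PD z w : P z -> P w -> P (z + w). Proof. by case: hP => -[_ _ h _] _ _; apply: h. Qed.
Lemma PM a z : S a -> P z -> P (a * z). Proof. by case: hP => -[_ _ _ h] _ _; apply: h. Qed.

Lemma P_rad z k : S z -> P (z ^+ k) -> P z.
Proof.
move=> hz; elim: k => [|k IH].
  by rewrite expr0 => h1; case: hP => _ h _; exfalso; apply: h.
rewrite exprS => h; case: hP => _ _ /(_ z (z ^+ k) hz (S_exp k hz) h) [//|]; exact: IH.
Qed.

Lemma P_pow z k : P z -> P (z ^+ k.+1).
Proof. by move=> hz; rewrite exprSr; apply: PM => //; apply: S_exp; apply: P_S. Qed.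

Lemma Q_prime : prime_ideal (fun r => P (f r)).
Proof.
split.
- split => //; first by rewrite rmorph0; apply: P0.
  + by move=> x y hx hy; rewrite rmorphD; apply: PD.
  + by move=> a x _ hx; rewrite rmorphM; apply: PM => //; apply: S_f.
- by rewrite rmorph1; case: hP.
- move=> x y _ _; rewrite rmorphM; case: hP => _ _ h /h; apply; apply: S_f.
Qed.


Lemma root_ex q (a : L) : (0 < q)%N -> exists u : L, u ^+ q = a.
Proof.
move=> hq; have [u hu] := @solve_monicpoly L q (fun i => if i == 0%N then a else 0) hq.
exists u; rewrite hu; case: q hq {hu} => // q _.
rewrite big_ord_recl /= expr0 mulr1 big1 ?addr0 // => i _.
by rewrite mul0r.
Qed.

Lemma P_powp z n : P z -> P (z ^+ (p ^ n)).
Proof.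
move=> hz; have hp0 : (0 < p ^ n)%N by rewrite expn_gt0 prime_gt0 // (pcharf_prime hpL).
by rewrite -(prednK hp0); apply: P_pow.
Qed.

Lemma bridge (ys : seq R) : (forall y, y \in ys -> P (f y)) ->
  (forall r, P (f r) -> exists n, span ys (r ^+ n)) ->
  forall z, P z <-> roots_ideal S p (map f ys) z.
Proof.
move=> hys hrad z; split.
- move=> hz; have [n [r e]] := P_S hz.
  have hr : P (f r) by rewrite -e; apply: P_powp.
  have [k hk] := hrad r hr.
  have hp1 : (1 < p)%N by rewrite prime_gt1 // (pcharf_prime hpL).
  have hkp : (k <= p ^ k)%N by apply: ltnW; apply: ltn_expl.
  have [c ec] : span ys (r ^+ (p ^ k)).
    by rewrite -(subnK hkp) exprD; apply: idM => //; apply: span_ideal.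
  pose N := (n + k)%N.
  have hq : (0 < p ^ N)%N by rewrite expn_gt0 ltnW.
  pose rt (x : L) := sval (constructive_indefinite_description _ (root_ex x hq)).
  have hrt : forall x, rt x ^+ (p ^ N) = x.
    by move=> x; exact: (svalP (constructive_indefinite_description _ (root_ex x hq))).
  exists (size ys), (fun j => rt (f (c j))), (fun j => rt (f ys`_j)); split.
  + by move=> j; exists N, (c j); apply: hrt.
  + by move=> j; exists N; rewrite hrt; apply: map_f; apply: mem_nth.
  + apply: (frob_inj hpL (N := N)).
    rewrite frob_sum //.
    under eq_bigr => j _ do rewrite exprMn !hrt.
    rewrite /N expnD exprM e -rmorphXn ec rmorph_sum.
    by apply: eq_bigr => j _; rewrite rmorphM.
- move=> [m [a [g [ha hg ->]]]].
  apply: (big_ind P); [exact: P0 | by move=> x y; apply: PD | move=> j _].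
  apply: PM => //.
  have [n hn] := hg j; have [y yin ey] := mapP hn.
  apply: (@P_rad (g j) (p ^ n)); first by exists n, y.
  by rewrite ey; apply: hys.
Qed.

End Bridge.

Unset Implicit Arguments.

Theorem lemma7p9 (p : nat) (R : idomainType) (L : closedFieldType)
    (f : {rmorphism R -> L}) :
  prime p -> p \in [pchar R] ->
  injective f ->
  (forall z : L, exists q : {poly R}, q != 0 /\ root (map_poly f q) z) ->
  noetherian R -> local_ring R ->
  (forall P : L -> Prop, prime_ideal_in (R_inf f p) P ->
     exists xs : seq L, (forall x, x \in xs -> R_inf f p x) /\
       (forall z, P z <-> roots_ideal (R_inf f p) p xs z))
  /\
  (krull_dim_lt R 3 ->
     exists l : nat, forall P : L -> Prop, prime_ideal_in (R_inf f p) P ->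
       exists xs : seq L, size xs = l /\ (forall x, x \in xs -> R_inf f p x) /\
         (forall z, P z <-> roots_ideal (R_inf f p) p xs z)).
Proof.
move=> hp hpR finj halg hN hloc.
have hpL : p \in [pchar L] := rmorph_pchar f hpR.
have hxs : forall ys x, x \in map f ys -> R_inf f p x.
  by move=> ys x /mapP [y _ ->]; apply: S_f.
split.
  move=> P hP.
  have hQp := Q_prime hP.
  have hQi : ideal (fun r => P (f r)) by case: hQp.
  have [ys [hys hQs]] := fin_gen hN hQi.
  exists (map f ys); split; first exact: hxs.
  apply: bridge => // r hr; exists 1%N; rewrite expr1; exact/hQs.
move=> hdim; exists 2%N => P hP.
have hQp := Q_prime hP.
have hQi : ideal (fun r => P (f r)) by case: hQp.
have [[x [qx nx0]] | nz] := classic (exists x, P (f x) /\ x != 0); last first.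
  exists (map f [:: 0; 0]); split => //; split; first exact: hxs.
  apply: bridge => //.
    move=> y yin; have -> : y = 0 by move: yin; rewrite !inE => /orP [] /eqP.
    by rewrite rmorph0; apply: (P0 hP).
  move=> r hr; exists 1%N; rewrite expr1.
  have -> : r = 0 by apply: NNPP => h; apply: nz; exists r; split => //; apply/eqP.
  exact: id0 (span_ideal _).
have [Psx [dx1 dx2 dx3]] := exists_decomp hN (span_ideal [:: x]).
have [Bad hBad] := filter_ex (fun Pk : R -> Prop => exists q, P (f q) /\ ~ Pk q) Psx.
have [y [qy hy]] : exists y, P (f y) /\ forall Pk, List.In Pk Bad -> ~ Pk y.
  apply: avoidance => // Pk /hBad [h1 h2]; split => //.
  by case: (dx1 Pk h1).
have [m [hm huniq]] := hloc.
have hmp : prime_ideal m := maximal_prime hm.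
have hQm : forall w, P (f w) -> m w.
  have nQ1 : ~ P (f 1) by case: hQp.
  have [M [hM hQM]] := exists_max hN hQi nQ1.
  by move=> w /hQM /(huniq M hM).
exists (map f [:: x; y]); split => //; split; first exact: hxs.
apply: bridge => //.
  by move=> z; rewrite !inE => /orP [] /eqP ->.
move=> r hr.
have [Psj [dj1 dj2 dj3]] := exists_decomp hN (span_ideal [:: x; y]).
apply: dj2 => Pi hPi.
have [hPip hJPi] := dj1 Pi hPi.
have hPii : ideal Pi by case: hPip.
apply: NNPP => npr.
have pix : Pi x by apply: hJPi; apply: span_mem; rewrite inE eqxx.
have piy : Pi y by apply: hJPi; apply: span_mem; rewrite !inE eqxx orbT.
have [Pk [hk hkPi]] := dx3 Pi hPip (fun w hw => span_sub hPii
   (fun z hz => eq_ind_r Pi pix (eqP (eq_ind _ is_true hz _ (mem_seq1 z x)))) hw).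
have [hPkp hxPk] := dx1 Pk hk.
have pkx : Pk x by apply: hxPk; apply: span_mem; rewrite inE eqxx.
have [hQPk | nQPk] := classic (forall w, P (f w) -> Pk w).
  by apply: npr; apply: hkPi; apply: hQPk.
have nPky : ~ Pk y.
  apply: hy; apply/hBad; split => //.
  apply: NNPP => hn; apply: nQPk => w qw; apply: NNPP => nw; apply: hn.
  by exists w.
have hPim : forall w, Pi w -> m w.
  have n1 : ~ Pi 1 by case: hPip.
  have [M [hM hPiM]] := exists_max hN hPii n1.
  by move=> w /hPiM /(huniq M hM).
apply: hdim.
exists (fun i => match i with
  | 0%N => fun w : R => w = 0
  | 1%N => Pk
  | 2%N => Pi
  | _ => m end); split.
- case=> [|[|[|[|i]]]] //= _.
  split; [split | |] => //.
  + by move=> a b -> ->; rewrite addr0.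
  + by move=> a b _ ->; rewrite mulr0.
  + by move/eqP; rewrite oner_eq0.
  + by move=> a b _ _ /eqP; rewrite mulf_eq0 => /orP [] /eqP; [left | right].
- case=> [|[|[|i]]] //= _; split.
  + by move=> w ->; case: hPkp => -[].
  + by exists x; split => // h; move: nx0; rewrite h eqxx.
  + exact: hkPi.
  + by exists y.
  + exact: hPim.
  + by exists r; split => //; apply: hQm.
Qed.
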